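(* Consider the delayed online learning protocol of the context. Assume that the maximum delay is bounded by $\tau$ (i.e. $\{1,\dots,t-\tau-1\}\subset\mathcal S_t$ for all $t$), that $\|g_t\|_*\le G$ for all $t$, and that the sequence of active feedback sets is non-decreasing, $\mathcal S_t\subset\mathcal S_{t+1}$ for all $t$. Let DDA be run with \[\eta_t=\frac{r}{\sqrt{\widetilde L_t+G^2(2\tau^2+3\tau+1)}}.\] Then for every $p\in\mathcal X$ with $h(p)\le r^2$, \[R_T(p)\le 2r\sqrt{\widetilde L_T+G^2(2\tau^2+3\tau+1)}\le 2r\sqrt{L_T+G^2(2\tau^2+3\tau+1)}.\]
   Context: Let $\mathcal V$ be a finite-dimensional real vector space with norm $\|\cdot\|$ and dual norm $\|\cdot\|_*$, and $\mathcal X\subset\mathcal V$ closed convex. A regularizer $h:\mathcal V\to\mathbb R\cup\{+\infty\}$ is lower semicontinuous, $1$-strongly convex w.r.t. $\|\cdot\|$ on $\mathcal X$, with $\mathcal X\subset\operatorname{dom}h$, whose subdifferential admits a continuous selection, and $h\ge0$. Protocol: at each round $t=1,\dots,T$ one agent $i(t)$ is active, plays $x_t\in\mathcal X$, incurs $f_t(x_t)$ ($f_t$ convex, $\mathcal X\subset\operatorname{dom}\partial f_t$); a subgradient $g_t\in\partial f_t(x_t)$ is revealed later. $\mathcal S^i_t\subset\{1,\dots,t-1\}$: timestamps of subgradients available to agent $i$ at time $t$, nondecreasing in $t$; $\mathcal S_t=\mathcal S^{i(t)}_t$, $\mathcal U_t=\{1,\dots,t-1\}\setminus\mathcal S_t$.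 DDA: $x_t=\arg\min_{x\in\mathcal X}\{\sum_{s\in\mathcal S_t}\langle g_s,x\rangle+h(x)/\eta_t\}$. Regret: $R_T(p)=\sum_{t}f_t(x_t)-\sum_tf_t(p)$. Lag: $L_t=\sum_{s=1}^t\big(\|g_s\|_*^2+2\|g_s\|_*\sum_{q\in\mathcal U_s}\|g_q\|_*\big)$. Arrival order: since the $\mathcal S_t$ are nested, fix a permutation $\sigma$ of $\{1,\dots,T\}$ such that for every $t$, $\mathcal S_t=\{\sigma(1),\dots,\sigma(|\mathcal S_t|)\}$ ($g_{\sigma(k)}$ is the $k$-th received subgradient; ties broken arbitrarily). Let $\mathcal R_t=\{\sigma(1),\dots,\sigma(\sigma^{-1}(t)-1)\}$ (timestamps of feedback received before $g_t$), and \[\widetilde L_t=\sum_{s\in\mathcal S_t}\Big(\|g_s\|_*^2+2\|g_s\|_*\sum_{q\in\mathcal R_s\setminus\mathcal S_s}\|g_q\|_*\Big).\] *)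

(* Defs.v *)
From HB Require Import structures.
From mathcomp Require Import all_boot all_order all_algebra.
From mathcomp Require Import all_classical all_reals all_analysis.
Set Implicit Arguments. Unset Strict Implicit. Unset Printing Implicit Defensive.
Import Order.TTheory GRing.Theory Num.Theory.
Import numFieldNormedType.Exports.
Local Open Scope classical_set_scope.
Local Open Scope ring_scope.

(* The finite-dimensional real vector space V is modelled as R^n = 'rV[R]_n;
   its dual is identified with R^n via the standard pairing [dot]. *)
Section Defs.
Variables (R : realType) (n : nat).
Notation vec := 'rV[R]_n.

Definition dot (g x : vec) : R := \sum_(i < n) g ord0 i * x ord0 i.

Definition is_norm (nrm : vec -> R) : Prop :=
  [/\ forall x y, nrm (x + y) <= nrm x + nrm y,
      forall (a : R) x, nrm (a *: x) = `|a| * nrm x &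
      forall x, nrm x = 0 -> x = 0].

Definition dual_norm (nrm : vec -> R) (g : vec) : R :=
  sup [set dot g x | x in [set x | nrm x <= 1]].

Definition cvx_set (X : set vec) : Prop :=
  forall (x y : vec) (l : R), X x -> X y -> 0 <= l <= 1 -> X (l *: x + (1 - l) *: y).

Definition convex_efun (f : vec -> \bar R) : Prop :=
  forall (x y : vec) (l : R), 0 <= l <= 1 ->
    (f (l *: x + (1 - l) *: y)%R <= l%:E * f x + (1 - l)%:E * f y)%E.

Definition edom (f : vec -> \bar R) : set vec := [set x | (f x < +oo)%E].

Definition subdiff (f : vec -> \bar R) (x : vec) : set vec :=
  [set g | f x \is a fin_num /\ forall y, (f x + (dot g (y - x))%:E <= f y)%E].

Definition dom_subdiff (f : vec -> \bar R) : set vec :=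
  [set x | exists g, subdiff f x g].

Definition strongly_convex_on (nrm : vec -> R) (X : set vec) (h : vec -> \bar R) :=
  forall (x y : vec) (l : R), X x -> X y -> 0 <= l <= 1 ->
    (h (l *: x + (1 - l) *: y)%R <=
       l%:E * h x + (1 - l)%:E * h y - (l * (1 - l) / 2 * nrm (x - y) ^+ 2)%:E)%E.

Definition continuous_selection (h : vec -> \bar R) : Prop :=
  exists s : vec -> vec,
    (forall x, dom_subdiff h x -> subdiff h x (s x)) /\
    {within dom_subdiff h, continuous s}.

Definition card_upto (S : pred nat) (t : nat) : nat :=
  size [seq s <- iota 1 t.-1 | S s].

(* R_t: timestamps q in {1..T} received before g_t in the arrival order
   sigma (a permutation of {1..T}), i.e. q = sigma k, t = sigma j, k < j. *)
Definition recv_before (sigma : nat -> nat) (T t q : nat) : bool :=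
  has (fun k => (sigma k == q) &&
        has (fun j => (sigma j == t) && (k < j)%N) (iota 1 T)) (iota 1 T).

Definition Ltilde (nrm : vec -> R) (g : nat -> vec) (S : nat -> pred nat)
    (sigma : nat -> nat) (T t : nat) : R :=
  \sum_(1 <= s < t | S t s)
     (dual_norm nrm (g s) ^+ 2 +
      2 * dual_norm nrm (g s) *
        \sum_(1 <= q < T.+1 | recv_before sigma T s q && ~~ S s q)
            dual_norm nrm (g q)).

(* L_t, with U_s = {1..s-1} \ S_s *)
Definition Llag (nrm : vec -> R) (g : nat -> vec) (S : nat -> pred nat)
    (t : nat) : R :=
  \sum_(1 <= s < t.+1)
     (dual_norm nrm (g s) ^+ 2 +
      2 * dual_norm nrm (g s) *
        \sum_(1 <= q < s | ~~ S s q) dual_norm nrm (g q)).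

Definition dda_obj (g : nat -> vec) (S : nat -> pred nat) (h : vec -> \bar R)
    (eta : nat -> R) (t : nat) (y : vec) : \bar R :=
  ((\sum_(1 <= s < t | S t s) dot (g s) y)%:E + h y * ((eta t)^-1)%:E)%E.

Definition regret (f : nat -> vec -> \bar R) (x : nat -> vec) (T : nat) (p : vec) : R :=
  \sum_(1 <= t < T.+1) (fine (f t (x t)) - fine (f t p)).

End Defs.

(* Main.v *)
Require Import Defs.
From HB Require Import structures.
From mathcomp Require Import all_boot all_order all_algebra.
From mathcomp Require Import all_classical all_reals all_analysis.
From mathcomp Require Import ring lra zify.
Set Implicit Arguments. Unset Strict Implicit. Unset Printing Implicit Defensive.
Import Order.TTheory GRing.Theory Num.Theory.
Import numFieldNormedType.Exports.
Local Open Scope classical_set_scope.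
Local Open Scope ring_scope.


Lemma coord_le (R : realType) n (x : 'rV[R]_n) i : `|x ord0 i| <= `|x|.
Proof.
rewrite [X in _ <= X]/Num.norm /= mx_normrE.
exact: (@le_bigmax _ _ _ 0 (fun ij : 'I_1 * 'I_n => `|x ij.1 ij.2|) (ord0, i)).
Qed.

Lemma lip_cont (R : realType) n (f : 'rV[R]_n -> R) M : 0 <= M ->
  (forall x y, `|f x - f y| <= M * `|x - y|) -> continuous f.
Proof.
move=> M0 Hf x; apply/(@cvgrPdist_lt _ _ _ (nbhs x) (nbhs_filter x)) => e e0.
have M1 : 0 < M + 1 by lra.
have eM : 0 < e / (M + 1) by rewrite divr_gt0.
near=> y.
apply: (le_lt_trans (Hf x y)).
have Hxy : ball x (e / (M + 1)) y by near: y; exact: nbhsx_ballx.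
rewrite -ball_normE /ball_ /= in Hxy.
rewrite ltr_pdivlMr // in Hxy.
have := normr_ge0 (x - y).
nra.
Unshelve. all: by end_near.
Qed.

Section NormFacts.
Variables (R : realType) (n : nat) (nrm : 'rV[R]_n -> R).
Hypothesis Hn : is_norm nrm.
Local Notation vec := 'rV[R]_n.

Lemma nrmD (x y : vec) : nrm (x + y) <= nrm x + nrm y. Proof. by case: Hn => H _ _; exact: H. Qed.
Lemma nrmZ a (x : vec) : nrm (a *: x) = `|a| * nrm x. Proof. by case: Hn => _ H _; exact: H. Qed.
Lemma nrm_eq0 (x : vec) : nrm x = 0 -> x = 0. Proof. by case: Hn => _ _ H; exact: H. Qed.
Lemma nrm0 : nrm 0 = 0.
Proof. by rewrite -(scale0r (0:vec)) nrmZ normr0 mul0r. Qed.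
Lemma nrmN (x : vec) : nrm (- x) = nrm x.
Proof. by rewrite -scaleN1r nrmZ normrN1 mul1r. Qed.
Lemma nrm_ge0 (x : vec) : 0 <= nrm x.
Proof. have := nrmD x (-x); rewrite subrr nrm0 nrmN. lra. Qed.
Lemma nrmB (x y : vec) : nrm (x - y) = nrm (y - x).
Proof. by rewrite -nrmN opprB. Qed.
Lemma nrm_sum (I : Type) (r : seq I) (F : I -> vec) :
  nrm (\sum_(i <- r) F i) <= \sum_(i <- r) nrm (F i).
Proof.
elim: r => [|i r IH]; first by rewrite !big_nil nrm0.
rewrite !big_cons; apply: le_trans (nrmD _ _) _; by rewrite lerD2l.
Qed.

Definition Mn := \sum_(j < n) nrm (delta_mx ord0 j : vec).
Lemma Mn_ge0 : 0 <= Mn.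
Proof. by apply: sumr_ge0 => j _; exact: nrm_ge0. Qed.

Lemma nrm_le_mx (x : vec) : nrm x <= Mn * `|x|.
Proof.
rewrite {1}(row_sum_delta x); apply: le_trans (nrm_sum _ _) _.
rewrite /Mn mulr_suml; apply: ler_sum => j _.
rewrite nrmZ mulrC; apply: ler_wpM2l; first exact: nrm_ge0.
exact: coord_le.
Qed.

Lemma nrm_lip (x y : vec) : `|nrm x - nrm y| <= Mn * `|x - y|.
Proof.
apply: le_trans (nrm_le_mx (x - y)).
rewrite ler_norml; apply/andP; split.
- have := nrmD (y - x) x; rewrite subrK nrmB. lra.
- have := nrmD (x - y) y; rewrite subrK. lra.
Qed.

Lemma nrm_cont : continuous nrm.
Proof. exact: (lip_cont Mn_ge0 nrm_lip). Qed.


Lemma nrm_equiv : exists2 m0 : R, 0 < m0 & forall x : vec, m0 * `|x| <= nrm x.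
Proof.
have [n0|npos] := eqVneq n 0%N.
  exists 1 => // x.
  have -> : x = 0 by apply/rowP => i; have := ltn_ord i; rewrite [X in (_ < X)%N]n0.
  by rewrite normr0 nrm0 mulr0.
have npos' : (0 < n)%N by rewrite lt0n.
pose e0 : vec := delta_mx ord0 (Ordinal npos').
have e0n0 : e0 != 0.
  apply/eqP => /rowP /(_ (Ordinal npos')); rewrite !mxE !eqxx /=.
  by move/eqP; rewrite oner_eq0.
pose S := [set x : vec | `|x| = 1].
have S0 : S !=set0.
  exists (`|e0|^-1 *: e0); rewrite /S /= normrZ normfV normr_id mulVf //.
  by rewrite normr_eq0.
have cS : compact S.
  apply: bounded_closed_compact.
    exists 1; split; first exact: num_real.
    by move=> M M1 x Sx; rewrite /= Sx ltW.
  rewrite (_ : S = (fun x : vec => `|x|) @^-1` [set 1]) //.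
  apply: (proj1 (continuous_closedP _)); first exact: norm_continuous.
  exact: closed_eq.
have [c cS' cmin] := compact_EVT_min S0 cS (continuous_subspaceT nrm_cont).
have Sc : `|c| = 1 by move: cS'; rewrite inE.
have m0pos : 0 < nrm c.
  rewrite lt0r nrm_ge0 andbT; apply/eqP => /nrm_eq0 c0.
  by move: Sc; rewrite c0 normr0 => /eqP; rewrite eq_sym oner_eq0.
exists (nrm c) => // x.
have [->|xn0] := eqVneq x 0; first by rewrite normr0 mulr0 nrm0.
have nx0 : 0 < `|x| by rewrite normr_gt0.
have := cmin (`|x|^-1 *: x).
rewrite inE /S /= normrZ normfV normr_id mulVf ?gt_eqF // => /(_ erefl).
rewrite nrmZ normfV normr_id => H.
by rewrite -ler_pdivlMr // mulrC.
Qed.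

End NormFacts.

Section Dot.
Variables (R : realType) (n : nat).
Local Notation vec := 'rV[R]_n.

Lemma dotDr (g x y : vec) : dot g (x + y) = dot g x + dot g y.
Proof. by rewrite /dot -big_split; apply: eq_bigr => i _; rewrite mxE mulrDr. Qed.
Lemma dotZr (g x : vec) a : dot g (a *: x) = a * dot g x.
Proof. by rewrite /dot mulr_sumr; apply: eq_bigr => i _; rewrite mxE mulrCA. Qed.
Lemma dotDl (g1 g2 x : vec) : dot (g1 + g2) x = dot g1 x + dot g2 x.
Proof. by rewrite /dot -big_split; apply: eq_bigr => i _; rewrite mxE mulrDl. Qed.
Lemma dot0r (g : vec) : dot g 0 = 0.
Proof. by rewrite /dot big1 // => i _; rewrite mxE mulr0. Qed.
Lemma dot0l (x : vec) : dot 0 x = 0.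
Proof. by rewrite /dot big1 // => i _; rewrite mxE mul0r. Qed.
Lemma dotNr (g x : vec) : dot g (- x) = - dot g x.
Proof. by rewrite -scaleN1r dotZr mulN1r. Qed.
Lemma dotNl (g x : vec) : dot (- g) x = - dot g x.
Proof. by rewrite /dot -sumrN; apply: eq_bigr => i _; rewrite mxE mulNr. Qed.
Lemma dotBr (g x y : vec) : dot g (x - y) = dot g x - dot g y.
Proof. by rewrite dotDr dotNr. Qed.
Lemma dotBl (g1 g2 x : vec) : dot (g1 - g2) x = dot g1 x - dot g2 x.
Proof. by rewrite dotDl dotNl. Qed.
Lemma dot_suml (I : Type) (r : seq I) (P : pred I) (F : I -> vec) x :
  dot (\sum_(i <- r | P i) F i) x = \sum_(i <- r | P i) dot (F i) x.
Proof.
elim: r => [|i r IH]; first by rewrite !big_nil dot0l.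
rewrite !big_cons; case: (P i) => //; by rewrite dotDl IH.
Qed.

Lemma dot_le_mx (g x : vec) : dot g x <= (\sum_i `|g ord0 i|) * `|x|.
Proof.
apply: le_trans (ler_norm _) _.
rewrite /dot mulr_suml; apply: le_trans (ler_norm_sum _ _ _) _.
apply: ler_sum => i _; rewrite normrM; apply: ler_wpM2l => //.
exact: coord_le.
Qed.

End Dot.

Section Dual.
Variables (R : realType) (n : nat) (nrm : 'rV[R]_n -> R).
Hypothesis Hn : is_norm nrm.
Local Notation vec := 'rV[R]_n.

Lemma dual_ub (g x : vec) : dot g x <= dual_norm nrm g * nrm x.
Proof.
have [m0 m0p Hm] := nrm_equiv Hn.
pose E := [set dot g y | y in [set y | nrm y <= 1]].
have E0 : E (dot g 0) by exists 0 => //=; rewrite nrm0 // ler01.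
have Eub : has_ubound E.
  exists ((\sum_i `|g ord0 i|) / m0) => _ [y /= y1 <-].
  apply: le_trans (dot_le_mx g y) _.
  have hy : `|y| * m0 <= 1 by have := Hm y; lra.
  rewrite ler_pdivlMr // -mulrA -[X in _ <= X]mulr1; apply: ler_wpM2l => //.
  by apply: sumr_ge0 => i _.
have [nx0|nxp] := eqVneq (nrm x) 0.
  by rewrite (nrm_eq0 Hn nx0) dot0r nrm0 // mulr0.
have nxpos : 0 < nrm x by rewrite lt0r nxp nrm_ge0.
have Eu : E (dot g ((nrm x)^-1 *: x)).
  exists ((nrm x)^-1 *: x) => //=.
  by rewrite (nrmZ Hn) normfV (ger0_norm (nrm_ge0 Hn x)) mulVf.
have := ub_le_sup Eub Eu.
rewrite dotZr -/(dual_norm nrm g) => H.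
by rewrite mulrC -ler_pdivrMl // mulrC.
Qed.

Lemma dual_ge0 (g : vec) : 0 <= dual_norm nrm g.
Proof.
have [m0 m0p Hm] := nrm_equiv Hn.
pose E := [set dot g y | y in [set y | nrm y <= 1]].
have E0 : E 0 by exists 0; [rewrite /= (nrm0 Hn) ler01 | rewrite dot0r].
have Eub : has_ubound E.
  exists ((\sum_i `|g ord0 i|) / m0) => _ [y /= y1 <-].
  apply: le_trans (dot_le_mx g y) _.
  have hy : `|y| * m0 <= 1 by have := Hm y; lra.
  rewrite ler_pdivlMr // -mulrA -[X in _ <= X]mulr1; apply: ler_wpM2l => //.
  by apply: sumr_ge0 => i _.
by have := ub_le_sup Eub E0.
Qed.

End Dual.



Lemma lsc_closed (R : realType) (T : topologicalType) (h : T -> \bar R) (phi : T -> R) :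
  lower_semicontinuous h -> continuous phi ->
  closed [set y | (h y <= (phi y)%:E)%E].
Proof.
move=> lsch cphi.
have -> : [set y | (h y <= (phi y)%:E)%E] = ~` [set y | ((phi y)%:E < h y)%E].
  by apply/seteqP; split => y /=; rewrite leNgt => /negP.
rewrite closedC openE => y0 /= Hy0.
have [b [b1 b2]] : exists b : R, phi y0 < b /\ (b%:E < h y0)%E.
  move: Hy0; case: (h y0) => [r| |] //=.
  - rewrite lte_fin => H; exists ((phi y0 + r) / 2)%R; split.
      lra.
    rewrite lte_fin; lra.
  - by move=> _; exists (phi y0 + 1)%R; split; [lra | exact: ltry].
have [V Vn HV] := lsch y0 b b2.
have H2 : \forall y \near y0, phi y < b by exact: (cvgr_lt _ (cphi y0)).
rewrite /interior; apply: filterS2 Vn H2 => y Vy Hy /=.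
by apply: lt_trans (HV y Vy); rewrite lte_fin.
Qed.

Lemma lim_lemma (R : realType) (A B : R) :
  (forall l : R, 0 < l < 1 -> (1 - l) * B <= A) -> B <= A.
Proof.
move=> H.
have [BA|AB] := leP B A => //.
have [B0|B0] := leP B 0.
  have h12 : (0 < 1/2 :> R) && (1/2 < 1 :> R) by apply/andP; split; lra.
  have := H _ h12; lra.
have d0 : 0 < 2 * B - A by lra.
have l0 : 0 < (B - A) / (2 * B - A) by rewrite divr_gt0 //; lra.
have l1 : (B - A) / (2 * B - A) < 1 by rewrite ltr_pdivrMr //; lra.
have := H _ (introT andP (conj l0 l1)).
have -> : 1 - (B - A) / (2 * B - A) = B / (2 * B - A) by field; lra.
rewrite mulrAC ler_pdivrMr // => HH.
nra.
Qed.

Section SC.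
Variables (R : realType) (n : nat) (nrm : 'rV[R]_n -> R).
Hypothesis Hn : is_norm nrm.
Local Notation vec := 'rV[R]_n.
Variables (X : set vec) (hr : vec -> R).
Hypothesis HX : cvx_set X.
Hypothesis Hsc : forall (x y : vec) (l : R), X x -> X y -> 0 <= l <= 1 ->
  hr (l *: x + (1 - l) *: y) <=
    l * hr x + (1 - l) * hr y - l * (1 - l) / 2 * nrm (x - y) ^+ 2.

Definition Fo (a : vec) (e : R) (y : vec) := dot a y + hr y / e.
Definition ismin a e z := X z /\ forall y, X y -> Fo a e z <= Fo a e y.

Lemma growth a e z y : 0 < e -> ismin a e z -> X y ->
  Fo a e z + nrm (y - z) ^+ 2 / e / 2 <= Fo a e y.
Proof.
move=> e0 [Xz zmin] Xy.
rewrite addrC -lerBrDr.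
apply: lim_lemma => l /andP[l0 l1].
have l01 : 0 <= l <= 1 by rewrite !ltW.
have Xw := HX Xy Xz l01.
have Hw := zmin _ Xw.
have Hh := Hsc Xy Xz l01.
rewrite /Fo dotDr !dotZr in Hw.
have Hh' : hr (l *: y + (1 - l) *: z) / e <=
   (l * hr y + (1 - l) * hr z - l * (1 - l) / 2 * nrm (y - z) ^+ 2) / e.
  by rewrite ler_pM2r // invr_gt0.
move: Hh' Hw; set D := nrm (y - z) ^+ 2; set W := hr _ => Hh' Hw.
have key : l * ((1 - l) * (D / e / 2)) <=
   l * (dot a y + hr y / e - (dot a z + hr z / e)).
  lra.
by rewrite ler_pM2l in key; rewrite /Fo.
Qed.

Lemma stab a1 a2 e z1 z2 M : 0 < e -> ismin a1 e z1 -> ismin a2 e z2 -> 0 <= M ->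
  (forall x, dot (a1 - a2) x <= M * nrm x) -> nrm (z1 - z2) <= e * M.
Proof.
move=> e0 m1 m2 M0 HM.
have g1 := growth e0 m1 (proj1 m2).
have g2 := growth e0 m2 (proj1 m1).
have HM' := HM (z2 - z1).
rewrite (nrmB Hn z2 z1) in g1 HM'.
rewrite dotBl !dotBr in HM'.
move: g1 g2 HM'; rewrite /Fo; set D := nrm (z1 - z2) => g1 g2 HM'.
have D0 : 0 <= D by exact: nrm_ge0.
have H1 : D ^+ 2 / e <= M * D by lra.
rewrite ler_pdivrMr // in H1.
have [->|Dn0] := eqVneq D 0; first by rewrite mulr_ge0 // ltW.
have Dp : 0 < D by rewrite lt0r Dn0 D0.
rewrite expr2 -[X in _ <= X]mulrA [X in _ <= _ * X]mulrC mulrA in H1.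
by rewrite ler_pM2r // mulrC in H1.
Qed.

End SC.


Lemma dot_abs_le (R : realType) n (a v : 'rV[R]_n) :
  `|dot a v| <= (\sum_i `|a ord0 i|) * `|v|.
Proof.
rewrite ler_norml; apply/andP; split; last exact: dot_le_mx.
have := dot_le_mx a (- v); rewrite dotNr normrN; lra.
Qed.

Lemma inv_le_nat (R : realType) (k K : nat) : (k <= K)%N ->
  (K.+1%:R : R)^-1 <= (k.+1%:R)^-1.
Proof.
move=> kK; rewrite lef_pV2 ?posrE ?ltr0Sn // ler_nat ltnS //.
Qed.

Section Exist.
Variables (R : realType) (n : nat) (nrm : 'rV[R]_n -> R).
Hypothesis Hn : is_norm nrm.
Local Notation vec := 'rV[R]_n.
Variables (X : set vec) (hr : vec -> R) (h : vec -> \bar R).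
Hypotheses (HXc : closed X) (Hlsc : lower_semicontinuous h)
  (Hhr : forall y, X y -> h y = (hr y)%:E) (x1 : vec) (Xx1 : X x1)
  (Hq : forall y, X y -> nrm (y - x1) ^+ 2 / 2 <= hr y).

Lemma exists_min a e : 0 < e -> exists z, ismin X hr a e z.
Proof.
move=> e0.
have [m0 m0p Hm] := nrm_equiv Hn.
set da := dual_norm nrm a.
have da0 : 0 <= da := dual_ge0 Hn a.
set F := Fo hr a e.
have hx10 : 0 <= hr x1.
  by have := Hq Xx1; rewrite subrr (nrm0 Hn) expr0n /= mul0r.
have est : forall y, X y ->
    dot a x1 - da * nrm (y - x1) + nrm (y - x1) ^+ 2 / 2 / e <= F y.
  move=> y Xy; have := Hq Xy; have := dual_ub Hn a (x1 - y).
  rewrite dotBr (nrmB Hn x1 y) -/da => H1 H2.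
  rewrite /F /Fo.
  have : nrm (y - x1) ^+ 2 / 2 / e <= hr y / e.
    by rewrite ler_pM2r ?invr_gt0.
  lra.
have lb : forall y, X y -> dot a x1 - e * da ^+ 2 / 2 <= F y.
  move=> y Xy; apply: le_trans (est y Xy).
  set D := nrm (y - x1).
  have : 0 <= (D - e * da) ^+ 2 / e / 2.
    by rewrite divr_ge0 // divr_ge0 ?sqr_ge0 // ltW.
  have -> : (D - e * da) ^+ 2 / e / 2 = D ^+ 2 / 2 / e - da * D + e * da ^+ 2 / 2.
    by field; rewrite gt_eqF.
  lra.
pose E := [set F y | y in X].
have hinf : has_inf E.
  split; first by exists (F x1); exists x1.
  by exists (dot a x1 - e * da ^+ 2 / 2) => _ [y Xy <-]; exact: lb.
set m := inf E.
have mle : forall y, X y -> m <= F y.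
  by move=> y Xy; apply: (ge_inf (proj2 hinf)); exists y.
have madh : forall eps : R, 0 < eps -> exists y, X y /\ F y < m + eps.
  move=> eps eps0; have [_ [y Xy <-] Hy] := inf_adherent eps0 hinf.
  by exists y.
pose rho := 2 * e * da + 2 * hr x1 + 2 * e + 1.
have bnd : forall y, X y -> F y <= F x1 + 1 -> nrm (y - x1) <= rho.
  move=> y Xy Hy; have := est y Xy.
  set D := nrm (y - x1) => Hy2.
  have D0 : 0 <= D by exact: nrm_ge0.
  have : D ^+ 2 / 2 / e <= da * D + hr x1 / e + 1.
    by move: Hy Hy2; rewrite /F /Fo; lra.
  rewrite -mulrA -invfM ler_pdivrMr ?mulr_gt0 // => HD.
  rewrite leNgt; apply/negP => rD.
  have D1 : 1 <= D by apply: le_trans (ltW rD); rewrite /rho; nra.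
  have : rho * D < D * D by rewrite ltr_pM2r //; lra.
  have E1 : (da * D + hr x1 / e + 1) * (2 * e) = 2 * e * da * D + 2 * hr x1 + 2 * e.
    by field; rewrite gt_eqF.
  rewrite E1 in HD.
  have c0 : 0 <= 2 * hr x1 + 2 * e + 1 by lra.
  have D1' : 0 <= D - 1 by rewrite subr_ge0.
  have := mulr_ge0 c0 D1'.
  rewrite /rho expr2 in HD *.
  lra.
pose rho' := rho / m0.
pose A := [set y : vec | X y /\ `|y - x1| <= rho'].
have cA : compact A.
  apply: bounded_closed_compact.
    exists (rho' + `|x1|); split; first exact: num_real.
    move=> M HM y [_ Hy] /=.
    apply: le_trans (ltW HM).
    have := ler_normD (y - x1) x1; rewrite subrK; lra.
  have -> : A = X `&` ((fun y : vec => `|y - x1|) @^-1` [set r | r <= rho']) by [].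
  apply: closedI => //.
  apply: (proj1 (continuous_closedP _)); last exact: closed_le.
  apply: (@lip_cont R n (fun y : vec => `|y - x1|) 1) => // u v.
  rewrite mul1r; apply: le_trans (ler_dist_dist _ _) _.
  by rewrite opprB addrA subrK.
pose g (k : nat) := [set y : vec | (h y <= ((m + (k.+1%:R)^-1 - dot a y) * e)%:E)%E].
have gcl : forall k, closed (g k).
  move=> k; apply: lsc_closed => //.
  apply: (@lip_cont R n _ ((\sum_i `|a ord0 i|) * e)).
    by apply: mulr_ge0; [apply: sumr_ge0 => i _ | exact: ltW].
  move=> u v.
  rewrite -mulrBl normrM (gtr0_norm e0) mulrC.
  have -> : (\sum_i `|a ord0 i|) * e * `|u - v| = e * ((\sum_i `|a ord0 i|) * `|u - v|) by ring.
  rewrite ler_pM2l //.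
  have -> : m + (k.+1%:R)^-1 - dot a u - (m + (k.+1%:R)^-1 - dot a v) = - dot a (u - v).
    by rewrite dotBr; ring.
  by rewrite normrN; exact: dot_abs_le.
pose f (k : nat) := A `&` g k.
have [z Hz] : \bigcap_(i in setT) f i !=set0.
  move: cA; rewrite compact_In0 /= => /(_ nat setT f); apply.
    by exists g => [k _|k _]; [exact: gcl|].
  move=> D' _.
  pose K := (\max_(k <- finmap.enum_fset D') k)%N.
  have Kp : 0 < (K.+1%:R : R)^-1 by rewrite invr_gt0 ltr0Sn.
  have [y [Xy Hy]] := madh _ Kp.
  exists y => k /= kD.
  have kK : (k <= K)%N by rewrite /K; apply: leq_bigmax_seq.
  have Hk := inv_le_nat R kK.
  have K1 : (K.+1%:R : R)^-1 <= 1 by have := inv_le_nat R (leq0n K); rewrite invr1.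
  split.
    split => //.
    have Fy1 : F y <= F x1 + 1.
      by have := mle x1 Xx1; move: Hy K1; generalize (F y) (F x1) ((K.+1%:R : R)^-1) => a1 a2 a4; lra.
    have := bnd y Xy Fy1 => H.
    rewrite /rho' ler_pdivlMr // mulrC; exact: le_trans (Hm _) H.
  rewrite /g /= Hhr // lee_fin -ler_pdivrMr //.
  move: Hy Hk; rewrite /F /Fo; set a1 := K.+1%:R^-1; set a2 := k.+1%:R^-1; clearbody a1 a2; lra.
have [[Xz _] _] := Hz 0%N I.
exists z; split => // y Xy.
apply: le_trans (mle y Xy).
rewrite leNgt; apply/negP => /ltr_add_invr [k Hk].
have [_ gk] := Hz k I.
move: gk; rewrite /g /= Hhr // lee_fin -ler_pdivrMr // => gk.
by move: Hk gk; rewrite /F /Fo; set a2 := k.+1%:R^-1; clearbody a2; lra.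
Qed.

End Exist.


Lemma amgm (R : realType) (e w D : R) : 0 < e -> w * D <= e * w ^+ 2 / 2 + D ^+ 2 / e / 2.
Proof.
move=> e0.
have : 0 <= (e * w - D) ^+ 2 / e / 2.
  by rewrite divr_ge0 // divr_ge0 ?sqr_ge0 // ltW.
have -> : (e * w - D) ^+ 2 / e / 2 = e * w ^+ 2 / 2 + D ^+ 2 / e / 2 - w * D.
  by field; rewrite gt_eqF.
lra.
Qed.

Section FTRL.
Variables (R : realType) (n : nat) (nrm : 'rV[R]_n -> R).
Hypothesis Hn : is_norm nrm.
Local Notation vec := 'rV[R]_n.
Variables (X : set vec) (hr : vec -> R).
Hypothesis HX : cvx_set X.
Hypothesis Hsc : forall (x y : vec) (l : R), X x -> X y -> 0 <= l <= 1 ->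
  hr (l *: x + (1 - l) *: y) <=
    l * hr x + (1 - l) * hr y - l * (1 - l) / 2 * nrm (x - y) ^+ 2.
Hypothesis hr0 : forall y, X y -> 0 <= hr y.

Lemma ftrl_step (A gk z y : vec) e S : 0 < e -> ismin X hr A e z -> X y ->
  S <= Fo hr A e z ->
  S + (dot gk z - e * dual_norm nrm gk ^+ 2 / 2) <= dot (A + gk) y + hr y / e.
Proof.
move=> e0 zm Xy HS.
have G1 := growth HX Hsc e0 zm Xy.
have G2 := dual_ub Hn gk (z - y).
rewrite dotBr (nrmB Hn z y) in G2.
have G3 := amgm (dual_norm nrm gk) (nrm (y - z)) e0.
move: G1 HS; rewrite /Fo dotDl => G1 HS.
lra.
Qed.

Variables (T : nat) (g : nat -> vec) (eta : nat -> R) (z : nat -> vec).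
Hypothesis eta_pos : forall t, (1 <= t <= T)%N -> 0 < eta t.
Hypothesis eta_mono : forall t, (1 <= t < T)%N -> eta t.+1 <= eta t.
Hypothesis zmin : forall t, (1 <= t <= T)%N ->
  ismin X hr (\sum_(1 <= s < t) g s) (eta t) (z t).

Lemma ftrl k : (1 <= k <= T)%N -> forall y, X y ->
  \sum_(1 <= t < k.+1) (dot (g t) (z t) - eta t * dual_norm nrm (g t) ^+ 2 / 2)
    <= dot (\sum_(1 <= s < k.+1) g s) y + hr y / eta k.
Proof.
elim: k => [|k IH] //.
move=> /andP[k1 kT] y Xy.
have kk : (1 <= k.+1 <= T)%N by rewrite k1 kT.
have zk := zmin kk.
have ek := eta_pos kk.
rewrite big_nat_recr //= [X in _ <= dot X _ + _]big_nat_recr //=.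
apply: ftrl_step => //.
case: k IH k1 kT kk zk ek => [|k] IH k1 kT kk zk ek.
  rewrite !big_geq // /Fo dot0l add0r.
  by apply: divr_ge0; [exact: hr0 (proj1 zk) | exact: ltW].
have k1' : (1 <= k.+1 <= T)%N by rewrite /=; lia.
apply: le_trans (IH k1' _ (proj1 zk)) _.
rewrite /Fo lerD2l.
have ek' := eta_pos k1'.
have em : eta k.+2 <= eta k.+1 by apply: eta_mono; lia.
apply: ler_wpM2l; first exact: hr0 (proj1 zk).
by rewrite lef_pV2 ?posrE.
Qed.

End FTRL.

Lemma sqrt_step (R : realType) (L' lam Lam : R) : 0 <= L' -> 0 <= lam ->
  L' + lam <= Lam -> 0 < Lam ->
  lam / (2 * Num.sqrt Lam) <= Num.sqrt (L' + lam) - Num.sqrt L'.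
Proof.
move=> L0 l0 LL Lp.
set a := Num.sqrt (L' + lam); set b := Num.sqrt L'; set c := Num.sqrt Lam.
have a0 : 0 <= a by exact: sqrtr_ge0.
have b0 : 0 <= b by exact: sqrtr_ge0.
have cp : 0 < c by rewrite sqrtr_gt0.
have ba : b <= a by rewrite ler_sqrt //; lra.
have ac : a <= c by rewrite ler_sqrt //; lra.
have Ha : a ^+ 2 = L' + lam by rewrite sqr_sqrtr //; lra.
have Hb : b ^+ 2 = L' by rewrite sqr_sqrtr.
have -> : lam = (a - b) * (a + b) by rewrite -subr_sqr Ha Hb; ring.
rewrite ler_pdivrMr ?mulr_gt0 //.
have : 0 <= a - b by lra.
move=> H; apply: ler_wpM2l => //; lra.
Qed.


Lemma cross_form (R : realType) (w : nat -> R) (lo hi lo' hi' : nat)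
    (A : pred nat) (B : nat -> pred nat) :
  \sum_(lo <= s < hi | A s) (2 * w s * \sum_(lo' <= q < hi' | B s q) w q) =
  2 * \sum_(lo <= s < hi) \sum_(lo' <= q < hi')
        (if A s && B s q then w s * w q else 0).
Proof.
rewrite mulr_sumr big_mkcond /=; apply: eq_bigr => s _.
case: (A s) => /=; last by rewrite big1 ?mulr0.
rewrite -mulrA mulr_sumr big_mkcond /= mulr_sumr; apply: eq_bigr => q _.
by case: (B s q); rewrite ?mulr0.
Qed.

Lemma swap_split (R : realType) (lo hi : nat) (P : nat -> nat -> bool)
    (W : nat -> nat -> R) :
  (forall s q, W s q = W q s) -> (forall s, P s s = false) ->
  \sum_(lo <= s < hi) \sum_(lo <= q < hi) (if P s q then W s q else 0) =
  \sum_(lo <= s < hi) \sum_(lo <= q < hi) (if P s q && (q < s)%N then W s q else 0) +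
  \sum_(lo <= s < hi) \sum_(lo <= q < hi) (if P q s && (q < s)%N then W s q else 0).
Proof.
move=> Wsym Pss.
have -> : \sum_(lo <= s < hi) \sum_(lo <= q < hi) (if P q s && (q < s)%N then W s q else 0)
  = \sum_(lo <= s < hi) \sum_(lo <= q < hi) (if P s q && (s < q)%N then W s q else 0).
  rewrite exchange_big /=; apply: eq_bigr => s _; apply: eq_bigr => q _.
  by rewrite Wsym.
rewrite -big_split /=; apply: eq_bigr => s _; rewrite -big_split /=.
apply: eq_bigr => q _.
case: (ltngtP q s) => [qs|sq|->]; rewrite ?andbT ?andbF ?addr0 ?add0r //.
by rewrite Pss.
Qed.

Lemma sum_win (R : realType) (lo hi u L : nat) (P : pred nat) :
  (forall i, (lo <= i < hi)%N -> P i -> (u <= i < u + L)%N) ->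
  \sum_(lo <= i < hi | P i) (1 : R) <= L%:R.
Proof.
move=> H.
have E1 : \sum_(lo <= i < hi | P i) (1 : R) <=
    \sum_(lo <= i < hi) (if (u <= i < u + L)%N then 1 else 0 : R).
  rewrite big_mkcond /= ler_sum_nat // => i Hi.
  case Pi: (P i) => //; first by rewrite (H i Hi Pi).
  by case: ifP.
apply: le_trans E1 _.
have [hl|lh] := leqP hi lo; first by rewrite big_geq // ler0n.
pose N := maxn hi (u + L).
have E2 : \sum_(lo <= i < hi) (if (u <= i < u + L)%N then 1 else 0 : R) <=
    \sum_(0 <= i < N) (if (u <= i < u + L)%N then 1 else 0 : R).
  have s1 : (lo <= hi)%N by lia.
  have s2 : (hi <= N)%N by rewrite /N; lia.
  rewrite (@big_cat_nat _ _ _ lo 0 N) ?leq0n ?(leq_trans s1 s2) //=.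
  rewrite (@big_cat_nat _ _ _ hi lo N) //=.
  rewrite addrC -addrA lerDl; apply: addr_ge0; apply: sumr_ge0 => i _;
    by case: ifP.
apply: le_trans E2 _.
have s3 : (u + L <= N)%N by rewrite /N; lia.
rewrite (@big_cat_nat _ _ _ u 0 N) ?leq0n ?(leq_trans (leq_addr L u) s3) //=.
rewrite (@big_cat_nat _ _ _ (u + L) u N) ?leq_addr //=.
have Z1 : \sum_(0 <= i < u) (if (u <= i < u + L)%N then 1 else 0 : R) = 0.
  apply: big1_seq => i /andP[_]; rewrite mem_index_iota => /andP[_ iu].
  by rewrite leqNgt iu.
have Z2 : \sum_(u + L <= i < N) (if (u <= i < u + L)%N then 1 else 0 : R) = 0.
  apply: big1_seq => i /andP[_]; rewrite mem_index_iota => /andP[iu _].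
  by rewrite ltnNge iu andbF.
have Z3 : \sum_(u <= i < u + L) (if (u <= i < u + L)%N then 1 else 0 : R) = L%:R.
  rewrite (eq_big_nat _ _ (F2 := fun _ => 1)); last by move=> i ->.
  by rewrite sumr_const_nat addKn.
by rewrite Z1 Z2 Z3 add0r addr0.
Qed.

Section Comb.
Variables (R : realType) (T tau : nat) (G : R) (w : nat -> R)
  (S : nat -> pred nat) (sigma : nat -> nat).
Hypothesis w0 : forall s, 0 <= w s.
Hypothesis wG : forall s, (1 <= s <= T)%N -> w s <= G.
Hypothesis Srange : forall t s, S t s -> (1 <= s < t)%N.
Hypothesis Snest : forall t s, (1 <= t < T)%N -> S t s -> S t.+1 s.
Hypothesis Sdelay : forall t s, (1 <= t <= T)%N -> (1 <= s)%N ->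
  (s + tau + 1 <= t)%N -> S t s.
Hypothesis sig_range : forall k, (1 <= k <= T)%N -> (1 <= sigma k <= T)%N.
Hypothesis sig_inj : {in [pred k | (1 <= k <= T)%N] &, injective sigma}.
Hypothesis Sperm : forall t q, (1 <= t <= T)%N ->
  S t q <-> exists k, (1 <= k <= card_upto (S t) t)%N /\ sigma k = q.

Local Notation rb := (recv_before sigma T).

Lemma card_le t : (card_upto (S t) t <= t.-1)%N.
Proof. by rewrite /card_upto size_filter; apply: leq_trans (count_size _ _) _; rewrite size_iota. Qed.

Lemma rbP s q : rb s q -> exists k j, [/\ (1 <= k <= T)%N, (1 <= j <= T)%N,
  sigma k = q, sigma j = s & (k < j)%N].
Proof.
move=> /hasP [k]; rewrite mem_iota => kr /andP[/eqP skq /hasP[j]].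
rewrite mem_iota => jr /andP[/eqP sjs kj].
exists k, j; split => //; lia.
Qed.

Lemma rbI k j : (1 <= k <= T)%N -> (1 <= j <= T)%N -> (k < j)%N ->
  rb (sigma j) (sigma k).
Proof.
move=> kr jr kj; apply/hasP; exists k; first by rewrite mem_iota; lia.
rewrite eqxx /=; apply/hasP; exists j; first by rewrite mem_iota; lia.
by rewrite eqxx.
Qed.

Lemma rb_anti s q : rb s q -> rb q s -> False.
Proof.
move=> /rbP [k [j [kr jr skq sjs kj]]] /rbP [k' [j' [kr' jr' sks sjq kj']]].
have e1 : k = j' by apply: sig_inj; rewrite ?inE //; rewrite skq sjq.
have e2 : j = k' by apply: sig_inj; rewrite ?inE //; rewrite sjs sks.
lia.
Qed.

Lemma Snotself t : ~~ S t t.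
Proof. by apply/negP => /Srange; lia. Qed.

Lemma pre_rb t a b : (1 <= t <= T)%N -> S t a -> ~~ S t b ->
  (exists j, (1 <= j <= T)%N /\ sigma j = b) -> rb b a.
Proof.
move=> tr Sa Sb [j [jr sjb]].
have [k [kr ska]] := (Sperm a tr).1 Sa.
have ct := card_le t.
have kj : (k < j)%N.
  rewrite ltnNge; apply/negP => jk.
  move/negP: Sb; apply; apply/(Sperm b tr); exists j; split => //; lia.
rewrite -ska -sjb; apply: rbI => //; lia.
Qed.

Lemma Snest' t u s : (1 <= t)%N -> (t <= u <= T)%N -> S t s -> S u s.
Proof.
move=> t1 /andP[tu uT]; elim: u tu uT => [|u IH] tu uT Sts; first by lia.
have [tu'|tu'] := leqP t u.
  apply: Snest; first by lia.
  by apply: IH => //; lia.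
by have -> : u.+1 = t by lia.
Qed.

Lemma preimage q t : (1 <= t <= T)%N -> S t q -> exists j, (1 <= j <= T)%N /\ sigma j = q.
Proof.
move=> tr Sq; have [k [kr skq]] := (Sperm q tr).1 Sq.
have := card_le t; exists k; split => //; lia.
Qed.

Definition ellw s := w s ^+ 2 + 2 * w s * \sum_(1 <= q < T.+1 | rb s q && ~~ S s q) w q.
Definition lamw s := w s ^+ 2 + 2 * w s * \sum_(1 <= q < s | ~~ S s q) w q.
Definition Lt t := \sum_(1 <= s < t | S t s) ellw s.
Definition Ll t := \sum_(1 <= s < t.+1) lamw s.

Lemma ellw_ge0 s : 0 <= ellw s.
Proof.
rewrite /ellw; apply: addr_ge0; first exact: sqr_ge0.
by apply: mulr_ge0; [apply: mulr_ge0|apply: sumr_ge0].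
Qed.

Lemma lamw_ge0 s : 0 <= lamw s.
Proof.
rewrite /lamw; apply: addr_ge0; first exact: sqr_ge0.
by apply: mulr_ge0; [apply: mulr_ge0|apply: sumr_ge0].
Qed.

Lemma Lt_ext t : (t <= T.+1)%N ->
  Lt t = \sum_(1 <= s < T.+1 | S t s) ellw s.
Proof.
move=> tT; rewrite /Lt (big_nat_widen _ _ _ _ _ tT).
apply: eq_bigl => s; case Sts: (S t s); rewrite ?andbF //=.
by have := Srange Sts; case/andP => _ ->.
Qed.

Lemma Lt_mono t u : (1 <= t)%N -> (t <= u <= T)%N -> Lt t <= Lt u.
Proof.
move=> t1 tu.
rewrite Lt_ext; last by lia.
rewrite Lt_ext; last by lia.
rewrite [X in X <= _]big_mkcond [X in _ <= X]big_mkcond /=.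
apply: ler_sum => s _.
case Sts: (S t s); first by rewrite (Snest' t1 tu Sts).
by case: (S u s) => //; exact: ellw_ge0.
Qed.


Lemma ler_sum_nat' (lo hi : nat) (F F2 : nat -> R) :
  (forall i, (lo <= i < hi)%N -> F i <= F2 i) ->
  \sum_(lo <= i < hi) F i <= \sum_(lo <= i < hi) F2 i.
Proof.
move=> H; rewrite big_seq [X in _ <= X]big_seq; apply: ler_sum => i.
by rewrite mem_index_iota; exact: H.
Qed.

Lemma rb_irr s : rb s s = false.
Proof. case E0: (rb s s) => //; exfalso; apply: (rb_anti E0); exact: E0. Qed.

Let W s q := w s * w q.
Lemma W_ge0 s q : 0 <= W s q. Proof. exact: mulr_ge0. Qed.
Lemma Wsym s q : W s q = W q s. Proof. by rewrite /W mulrC. Qed.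

Lemma ifW_ge0 (b : bool) s q : 0 <= (if b then w s * w q else 0).
Proof. by case: b => //; exact: mulr_ge0. Qed.

Lemma C1 : Lt T <= Ll T.
Proof.
rewrite Lt_ext // /Ll /ellw /lamw !big_split /=.
apply: lerD.
  rewrite [X in X <= _]big_mkcond /=; apply: ler_sum => s _.
  by case: ifP => // _; exact: sqr_ge0.
rewrite cross_form.
have -> : \sum_(1 <= s < T.+1) (2 * w s * \sum_(1 <= q < s | ~~ S s q) w q) =
   \sum_(1 <= s < T.+1 | true) (2 * w s * \sum_(1 <= q < T.+1 | ~~ S s q && (q < s)%N) w q).
  apply: eq_big_nat => s sr; congr (_ * _).
  by rewrite (big_nat_widen _ _ _ _ _ (_ : s <= T.+1)%N) //; lia.
rewrite cross_form ler_pM2l // swap_split //; last first.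
  by move=> s; rewrite rb_irr !andbF.
  by move=> s q; exact: Wsym.
rewrite -big_split /=; apply: ler_sum_nat' => s sr.
rewrite -big_split /=; apply: ler_sum_nat' => q qr.
case: (ltnP q s) => qs; last first.
  by rewrite !andbF add0r /=.
rewrite !andbT /=.
case Psq: (S T s && (rb s q && ~~ S s q)).
  have Pqs : (S T q && (rb q s && ~~ S q s)) = false.
    apply/negP => /andP[_ /andP[rqs _]].
    by move/andP: Psq => [_ /andP[rsq _]]; exact: rb_anti rsq rqs.
  by move/andP: Psq => [_ /andP[_ ->]]; rewrite Pqs addr0.
rewrite add0r.
case Pqs: (S T q && (rb q s && ~~ S q s)); last exact: ifW_ge0.
move/andP: Pqs => [_ /andP[rqs _]].
case Ssq: (S s q) => /=; last by [].
exfalso.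
have [k [j [kr jr sks sjq kj]]] := rbP rqs.
have sr' : (1 <= s <= T)%N by lia.
have := pre_rb sr' Ssq (Snotself s) (ex_intro _ k (conj kr sks)).
by move=> rsq; exact: rb_anti rsq rqs.
Qed.


Lemma sq_le s : (1 <= s <= T)%N -> w s ^+ 2 <= G ^+ 2.
Proof.
move=> sr; have := wG sr; have := w0 s => a b.
by rewrite !expr2; apply: ler_pM.
Qed.

Lemma G0 : (1 <= T)%N -> 0 <= G.
Proof. by move=> T1; apply: le_trans (w0 1) (wG _); rewrite T1. Qed.

Lemma C2 t : (1 <= t <= T)%N ->
  Ll t <= Lt t + G ^+ 2 * (2 * tau%:R ^+ 2 + 3 * tau%:R + 1).
Proof.
move=> tr.
have Gp : 0 <= G by apply: G0; lia.
rewrite Lt_ext; last by lia.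
rewrite /Ll /ellw /lamw !big_split /=.
have Sq : \sum_(1 <= s < t.+1) w s ^+ 2 <=
    \sum_(1 <= s < T.+1 | S t s) w s ^+ 2 + G ^+ 2 * (tau.+1)%:R.
  rewrite (bigID (S t)) /=; apply: lerD.
    rewrite (big_nat_widen _ _ T.+1); last by lia.
    rewrite [X in _ <= X]big_mkcond [X in X <= _]big_mkcond /=.
    apply: ler_sum => s _; case: (S t s); rewrite ?andbT ?andbF //=.
    by case: ifP => // _; exact: sqr_ge0.
  apply: le_trans (_ : \sum_(1 <= s < t.+1 | ~~ S t s) G ^+ 2 <= _).
    rewrite big_seq_cond [X in _ <= X]big_seq_cond; apply: ler_sum => s.
    rewrite mem_index_iota => /andP[sr _]; apply: sq_le; lia.
  rewrite (eq_bigr (fun _ => G ^+ 2 * 1)); last by move=> *; rewrite mulr1.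
  rewrite -mulr_sumr; apply: ler_wpM2l; first exact: sqr_ge0.
  apply: (@sum_win _ 1 t.+1 (t - tau) tau.+1) => s sr Sts.
  have : ~ (s + tau + 1 <= t)%N.
    by move=> H0; move/negP: Sts; apply; apply: Sdelay => //; lia.
  lia.
pose cov s q := [&& (s < t.+1)%N, ~~ S s q, (q < s)%N, S t s & S t q].
pose unc s q := [&& (s < t.+1)%N, ~~ S s q, (q < s)%N & ~~ (S t s && S t q)].
have Cr1 : \sum_(1 <= s < t.+1) (2 * w s * \sum_(1 <= q < s | ~~ S s q) w q) =
   2 * (\sum_(1 <= s < T.+1) \sum_(1 <= q < T.+1) (if cov s q then w s * w q else 0) +
        \sum_(1 <= s < T.+1) \sum_(1 <= q < T.+1) (if unc s q then w s * w q else 0)).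
  rewrite (big_nat_widen _ _ T.+1); last by lia.
  rewrite (eq_bigr (fun s => 2 * w s * \sum_(1 <= q < T.+1 | ~~ S s q && (q < s)%N) w q)); last first.
    move=> s /= Hs; congr (_ * _).
    by rewrite (big_nat_widen _ _ T.+1) //; lia.
  rewrite cross_form; congr (_ * _).
  rewrite -big_split /=; apply: eq_bigr => s _; rewrite -big_split /=.
  apply: eq_bigr => q _; rewrite /cov /unc.
  case: (s < t.+1)%N; case: (S s q); case: (q < s)%N; case: (S t s); case: (S t q);
    by rewrite /= ?addr0 ?add0r.
have Cov : \sum_(1 <= s < T.+1) \sum_(1 <= q < T.+1) (if cov s q then w s * w q else 0)
   <= \sum_(1 <= s < T.+1) \sum_(1 <= q < T.+1)
        (if S t s && (rb s q && ~~ S s q) then w s * w q else 0).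
  rewrite [X in _ <= X]swap_split; last first.
    by move=> s; rewrite rb_irr !andbF.
    by move=> s q; exact: Wsym.
  rewrite -big_split /=; apply: ler_sum_nat' => s sr.
  rewrite -big_split /=; apply: ler_sum_nat' => q qr.
  case Cv: (cov s q); last first.
    by apply: addr_ge0; exact: ifW_ge0.
  move/and5P: Cv => [st Ssq qs Sts Stq].
  have [ks [ksr sks]] := preimage tr Sts.
  have [kq [kqr skq]] := preimage tr Stq.
  have kne : ks != kq by apply/eqP => E1; move: qs; rewrite -sks -skq E1 ltnn.
  case: (ltngtP kq ks) => [kqs|ksq|E1]; last by rewrite E1 eqxx in kne.
  - have rsq : rb s q by rewrite -sks -skq; apply: rbI.
    rewrite Sts rsq Ssq qs /=.
    by rewrite lerDl; exact: ifW_ge0.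
  - have rqs : rb q s by rewrite -sks -skq; apply: rbI.
    have Sqs : ~~ S q s by apply/negP => /Srange; lia.
    rewrite Stq rqs Sqs qs /=.
    by rewrite lerDr; exact: ifW_ge0.
have Unc : \sum_(1 <= s < T.+1) \sum_(1 <= q < T.+1) (if unc s q then w s * w q else 0)
   <= G ^+ 2 * (tau%:R * (tau.+1)%:R).
  pose win1 s := ((t <= s + tau) && (s <= t))%N.
  pose win2 s q := ((s <= q + tau) && (q < s))%N.
  apply: le_trans (_ : \sum_(1 <= s < T.+1) (if win1 s then G ^+ 2 * tau%:R else 0) <= _).
    apply: ler_sum_nat' => s sr.
    apply: le_trans (_ : \sum_(1 <= q < T.+1) (if win1 s && win2 s q then G ^+ 2 else 0) <= _).
      apply: ler_sum_nat' => q qr.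
      case U: (unc s q); last by case: ifP => // _; exact: sqr_ge0.
      move/and4P: U => [st Ssq qs Stsq].
      have w2 : win2 s q.
        rewrite /win2 qs andbT leqNgt; apply/negP => H1.
        by move/negP: Ssq; apply; apply: Sdelay; lia.
      have w1 : win1 s.
        rewrite /win1 (_ : (s <= t)%N) ?andbT; last by lia.
        case/nandP: Stsq => H1.
          rewrite leqNgt; apply/negP => H2.
          by move/negP: H1; apply; apply: Sdelay; lia.
        rewrite leqNgt; apply/negP => H2.
        by move/negP: H1; apply; apply: Sdelay; lia.
      rewrite w1 w2 expr2; apply: ler_pM => //; apply: wG; lia.
    case: (win1 s) => /=; last by rewrite big1.
    rewrite -big_mkcond /=.
    rewrite (eq_bigr (fun _ => G ^+ 2 * 1)); last by move=> *; rewrite mulr1.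
    rewrite -mulr_sumr; apply: ler_wpM2l; first exact: sqr_ge0.
    apply: (@sum_win _ 1 T.+1 (s - tau) tau) => q qr /andP[a b]; lia.
  rewrite -big_mkcond /=.
  rewrite (eq_bigr (fun _ => G ^+ 2 * tau%:R * 1)); last by move=> *; rewrite mulr1.
  rewrite -mulr_sumr -mulrA; apply: ler_wpM2l; first exact: sqr_ge0.
  apply: ler_wpM2l; first exact: ler0n.
  apply: (@sum_win _ 1 T.+1 (t - tau) tau.+1) => q qr /andP[a b]; lia.
rewrite Cr1 cross_form.
have E1 : ((tau.+1)%:R : R) = tau%:R + 1 by rewrite natr1.
rewrite E1 in Sq Unc.
have H4 := ler_wpM2l (ler0n R 2) (lerD Cov Unc).
apply: le_trans (lerD Sq H4) _.
have EE : forall B Y : R, B + G ^+ 2 * (tau%:R + 1) + 2 * (Y + G ^+ 2 * (tau%:R * (tau%:R + 1))) = B + 2 * Y + G ^+ 2 * (2 * tau%:R ^+ 2 + 3 * tau%:R + 1) by move=> *; ring.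
by rewrite EE.
Qed.

End Comb.


Theorem proposition2
  (R : realType) (n : nat)
  (nrm : 'rV[R]_n -> R) (X : set 'rV[R]_n) (h : 'rV[R]_n -> \bar R)
  (* agents, active agent, per-agent feedback sets *)
  (Agent : Type) (act : nat -> Agent) (Sa : Agent -> nat -> pred nat)
  (T : nat) (tau : nat) (G r : R)
  (f : nat -> 'rV[R]_n -> \bar R) (x g : nat -> 'rV[R]_n)
  (sigma : nat -> nat) :
  is_norm nrm ->
  closed X -> cvx_set X ->
  lower_semicontinuous h ->
  strongly_convex_on nrm X h ->
  X `<=` edom h ->
  continuous_selection h ->
  (forall y, (0 <= h y)%E) ->
  (forall t, (1 <= t <= T)%N ->
     convex_efun (f t) /\ (forall y, f t y != -oo%E) /\ X `<=` dom_subdiff (f t)) ->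
  (* feedback sets: subsets of {1..t-1}, nondecreasing in t for each agent *)
  (forall a t s, Sa a t s -> (1 <= s < t)%N) ->
  (forall a t1 t2 s, (t1 <= t2)%N -> Sa a t1 s -> Sa a t2 s) ->
  let Sact := fun t => Sa (act t) t in
  (* bounded delay *)
  (forall t s, (1 <= t <= T)%N -> (1 <= s)%N -> (s + tau + 1 <= t)%N -> Sact t s) ->
  (* bounded subgradients *)
  (forall t, (1 <= t <= T)%N -> dual_norm nrm (g t) <= G) ->
  (* active feedback sets are non-decreasing *)
  (forall t s, (1 <= t < T)%N -> Sact t s -> Sact t.+1 s) ->
  (* arrival order sigma: a permutation of {1..T} listing the S_t as prefixes *)
  (forall k, (1 <= k <= T)%N -> (1 <= sigma k <= T)%N) ->
  {in [pred k | (1 <= k <= T)%N] &, injective sigma} ->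
  (forall t q, (1 <= t <= T)%N ->
     Sact t q <-> exists k, (1 <= k <= card_upto (Sact t) t)%N /\ sigma k = q) ->
  0 < G -> 0 < r ->
  let c := G ^+ 2 * (2 * tau%:R ^+ 2 + 3 * tau%:R + 1) in
  let eta := fun t => r / Num.sqrt (Ltilde nrm g Sact sigma T t + c) in
  (* x_t is the DDA iterate, g_t a subgradient of f_t at x_t *)
  (forall t, (1 <= t <= T)%N ->
     X (x t) /\ (forall y, X y -> (dda_obj g Sact h eta t (x t) <= dda_obj g Sact h eta t y)%E)) ->
  (forall t, (1 <= t <= T)%N -> subdiff (f t) (x t) (g t)) ->
  forall p, X p -> (h p <= (r ^+ 2)%:E)%E ->
    regret f x T p <= 2 * r * Num.sqrt (Ltilde nrm g Sact sigma T T + c) /\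
    2 * r * Num.sqrt (Ltilde nrm g Sact sigma T T + c)
      <= 2 * r * Num.sqrt (Llag nrm g Sact T + c).
Proof.
move=> Hn Xcl Xcvx hlsc hsc Xdom csel h0 fprop Srng Snest_a Sact delay gG Sinc
  sig_rng sig_inj Sperm G0 r0 c eta Hx Hg p Xp hp.
pose w := fun s => dual_norm nrm (g s).
have w0 : forall s, 0 <= w s by move=> s; exact: dual_ge0.
have Srange : forall t s, Sact t s -> (1 <= s < t)%N by move=> t s; exact: Srng.
have LtE : forall t, Ltilde nrm g Sact sigma T t = Lt T w Sact sigma t by [].
have LlE : forall t, Llag nrm g Sact t = Ll w Sact t by [].
have c0 : 0 < c.
  rewrite /c; apply: mulr_gt0; first by rewrite exprn_gt0.
  have := ler0n R tau; have := sqr_ge0 (tau%:R : R); lra.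
have Lt0 : forall t, 0 <= Lt T w Sact sigma t.
  by move=> t; apply: sumr_ge0 => s _; exact: ellw_ge0.
have C1' := C1 w0 Srange sig_inj Sperm.
split; last first.
  rewrite LtE LlE ler_pM2l; last by rewrite mulr_gt0.
  have Ll0 : 0 <= Ll w Sact T by apply: sumr_ge0 => s _; exact: lamw_ge0.
  rewrite ler_sqrt; last by apply: addr_ge0 => //; exact: ltW.
  by rewrite lerD2r.
have [T0|Tpos] := eqVneq T 0%N.
  rewrite /regret T0 big_geq //.
  by apply: mulr_ge0; [apply: mulr_ge0 => //; exact: ltW|exact: sqrtr_ge0].
have T1 : (1 <= T)%N by rewrite lt0n.
pose hr := fun y => fine (h y).
have Hhr : forall y, X y -> h y = (hr y)%:E.
  move=> y Xy; rewrite /hr fineK //.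
  by rewrite ge0_fin_numE //; exact: Xdom.
have hr0 : forall y, X y -> 0 <= hr y.
  by move=> y Xy; rewrite /hr fine_ge0.
have Hsc : forall (x y : 'rV[R]_n) (l : R), X x -> X y -> 0 <= l <= 1 ->
  hr (l *: x + (1 - l) *: y) <=
    l * hr x + (1 - l) * hr y - l * (1 - l) / 2 * nrm (x - y) ^+ 2.
  move=> x0 y0 l Xx Xy l01.
  have := hsc x0 y0 l Xx Xy l01.
  rewrite (Hhr _ (Xcvx _ _ _ Xx Xy l01)) (Hhr _ Xx) (Hhr _ Xy).
  rewrite -!EFinM -EFinD; rewrite -?EFinN -?EFinD lee_fin //.
have Lam0 : forall t, 0 < Lt T w Sact sigma t + c.
  by move=> t; apply: ltr_wpDl => //; exact: Lt0.
have sq0 : forall t, 0 < Num.sqrt (Lt T w Sact sigma t + c).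
  by move=> t; rewrite sqrtr_gt0.
have eta0 : forall t, 0 < eta t by move=> t; rewrite /eta LtE divr_gt0.
have eta_mono : forall t, (1 <= t < T)%N -> eta t.+1 <= eta t.
  move=> t tr; rewrite /eta !LtE ler_pM2l // lef_pV2 ?posrE //.
  rewrite ler_sqrt; last exact: ltW.
  rewrite lerD2r; apply: (Lt_mono sigma w0 Srange Sinc); lia.
have xmin : forall t, (1 <= t <= T)%N ->
    ismin X hr (\sum_(1 <= s < t | Sact t s) g s) (eta t) (x t).
  move=> t tr; have [Xxt Hxt] := Hx t tr; split => // y Xy.
  have := Hxt y Xy.
  rewrite /dda_obj (Hhr _ Xxt) (Hhr _ Xy) -!EFinM -!EFinD lee_fin.
  by rewrite /Fo !dot_suml.
have x1min := xmin 1%N (introT andP (conj (leqnn 1) T1)).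
rewrite big_geq // in x1min.
have Hq : forall y, X y -> nrm (y - x 1%N) ^+ 2 / 2 <= hr y.
  move=> y Xy; have := growth Xcvx Hsc (eta0 1%N) x1min Xy.
  rewrite /Fo !dot0l !add0r.
  have := hr0 _ (proj1 x1min).
  set D := nrm (y - x 1%N) ^+ 2 => H1 H2.
  have e1 := eta0 1%N.
  have : (hr (x 1%N) + D / 2) / eta 1%N <= hr y / eta 1%N.
    by move: H2; rewrite mulrDl mulrAC.
  rewrite ler_pM2r ?invr_gt0 //; lra.
have zex : forall t, exists z, ismin X hr (\sum_(1 <= s < t) g s) (eta t) z.
  by move=> t; apply: (exists_min Hn Xcl hlsc Hhr (proj1 x1min) Hq); exact: eta0.
pose z := fun t => proj1_sig (cid (zex t)).
have zmin : forall t, ismin X hr (\sum_(1 <= s < t) g s) (eta t) (z t).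
  by move=> t; exact: proj2_sig (cid (zex t)).
have FT := ftrl Hn Xcvx Hsc hr0 (fun t _ => eta0 t) eta_mono (fun t _ => zmin t)
  (introT andP (conj T1 (leqnn T))) Xp.
pose M t := \sum_(1 <= q < t | ~~ Sact t q) w q.
have stabt : forall t, (1 <= t <= T)%N -> nrm (x t - z t) <= eta t * M t.
  move=> t tr.
  apply: (stab Hn Xcvx Hsc (eta0 t) (xmin t tr) (zmin t)).
    by apply: sumr_ge0.
  move=> y.
  rewrite [X in _ - X](bigID (Sact t)) /= opprD addrA subrr add0r.
  rewrite dotNl dot_suml -sumrN /M mulr_suml; apply: ler_sum => q _.
  by rewrite -dotNr -(nrmN Hn y); exact: dual_ub.
have subg : forall t, (1 <= t <= T)%N ->
    fine (f t (x t)) - fine (f t p) <= dot (g t) (x t) - dot (g t) p.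
  move=> t tr.
  have [fxfin Hs] := Hg t tr.
  have [_ [_ Xsub]] := fprop t tr.
  have [g' [fpfin _]] := Xsub p Xp.
  have := Hs p.
  rewrite -(fineK fxfin) -(fineK fpfin) -EFinD lee_fin dotBr.
  lra.
have key : forall t, (1 <= t <= T)%N ->
    fine (f t (x t)) - fine (f t p) <=
    (dot (g t) (z t) - eta t * w t ^+ 2 / 2) - dot (g t) p + eta t * lamw w Sact t / 2.
  move=> t tr.
  apply: le_trans (subg t tr) _.
  have H1 := dual_ub Hn (g t) (x t - z t).
  have H2 := stabt t tr.
  rewrite dotBr in H1.
  have H3 : w t * nrm (x t - z t) <= w t * (eta t * M t) by apply: ler_wpM2l.
  rewrite /lamw -/(M t).
  move: H1 H3; rewrite -/(w t) => H1 H3.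
  lra.
have C2' : forall t, (1 <= t <= T)%N -> Ll w Sact t <= Lt T w Sact sigma t + c.
  move=> t tr; apply: (C2 w0 _ Srange delay sig_inj Sperm tr).
  by move=> s sr; exact: gG.
have Ll0 : forall t, 0 <= Ll w Sact t.
  by move=> t; apply: sumr_ge0 => s _; exact: lamw_ge0.
have AR : forall k, (k <= T)%N ->
    \sum_(1 <= t < k.+1) eta t * lamw w Sact t / 2 <= r * Num.sqrt (Ll w Sact k).
  elim=> [|k IH] kT.
    by rewrite !big_geq // /Ll big_geq // sqrtr0 mulr0.
  rewrite big_nat_recr //=.
  have IH' := IH (ltnW kT).
  have kr : (1 <= k.+1 <= T)%N by rewrite kT.
  have Hs := sqrt_step (Ll0 k) (@lamw_ge0 _ w Sact w0 k.+1) _ (Lam0 k.+1).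
  have Ek : Ll w Sact k.+1 = Ll w Sact k + lamw w Sact k.+1 by rewrite /Ll big_nat_recr.
  have := C2' _ kr; rewrite Ek => C2k.
  have Hs' := Hs C2k.
  have -> : eta k.+1 * lamw w Sact k.+1 / 2 =
      r * (lamw w Sact k.+1 / (2 * Num.sqrt (Lt T w Sact sigma k.+1 + c))).
    by rewrite /eta LtE; field; rewrite gt_eqF.
  have := ler_wpM2l (ltW r0) Hs'.
  lra.
have ART := AR T (leqnn T).
have hpr : hr p <= r ^+ 2 by rewrite -lee_fin -Hhr.
have Hfin : hr p / eta T <= r * Num.sqrt (Lt T w Sact sigma T + c).
  rewrite /eta LtE.
  have -> : hr p / (r / Num.sqrt (Lt T w Sact sigma T + c)) =
     hr p * Num.sqrt (Lt T w Sact sigma T + c) / r.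
    by field; rewrite !gt_eqF.
  rewrite ler_pdivrMr //.
  have -> : r * Num.sqrt (Lt T w Sact sigma T + c) * r =
    r ^+ 2 * Num.sqrt (Lt T w Sact sigma T + c) by ring.
  by apply: ler_wpM2r => //; exact: ltW.
have Hll : r * Num.sqrt (Ll w Sact T) <= r * Num.sqrt (Lt T w Sact sigma T + c).
  rewrite ler_pM2l // ler_sqrt; last exact: ltW.
  by apply: C2'; rewrite T1 leqnn.
have Hreg : regret f x T p <=
    \sum_(1 <= t < T.+1) ((dot (g t) (z t) - eta t * w t ^+ 2 / 2) - dot (g t) p
      + eta t * lamw w Sact t / 2).
  rewrite /regret big_seq [X in _ <= X]big_seq; apply: ler_sum => t.
  rewrite mem_index_iota => tr; exact: key.
rewrite !big_split /= sumrN in Hreg.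
rewrite sumrN -dot_suml in Hreg.
rewrite big_split /= sumrN in FT.
rewrite LtE.
move: FT ART Hreg Hfin Hll.
rewrite /w.
lra.
Qed.
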